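(* Let $\Bbbk$ be a field and let $\mathcal{C}$ be a $\Bbbk$-admissible $2$-category. Let $\mathcal{S}(\mathcal{C})$ be the set of isomorphism classes of indecomposable $1$-morphisms in $\mathcal{C}$, and for $F,G,H\in\mathcal{S}(\mathcal{C})$ let $\mu_{F,G}(H)$ be the multiplicity with which $H$ occurs as a direct summand of the composition $F\circ G$. Then $(\mathcal{S}(\mathcal{C}),\mu)$ is a finitary multisemigroup with multiplicities.
   Context: A $2$-category $\mathcal{C}$ is $\Bbbk$-admissible if for all objects $\mathtt{i},\mathtt{j}$ the category $\mathcal{C}(\mathtt{i},\mathtt{j})$ is $\Bbbk$-linear, idempotent split and Krull–Schmidt, and horizontal composition is $\Bbbk$-bilinear. For a cardinal $\kappa\ge1$, $\mathrm{Card}_\kappa$ is the set of cardinals $\le\kappa$ with cardinal addition (of arbitrary families) and cardinal multiplication, any result larger than $\kappa$ being identified with $\kappa$; $\mathcal{B}_\kappa(X)$ is the set of functions $X\to\mathrm{Card}_\kappa$; for a cardinal $\lambda$ and $\nu\in\mathcal{B}_\kappa(S)$, $\lambda\nu$ is the pointwise sum of $\lambda$ copies of $\nu$. A multisemigroup with multiplicities bounded by $\kappa$ is a pair $(S,\mu)$, $S$ a non-empty set, $\mu:S\times S\to\mathcal{B}_\kappa(S)$, $(s,t)\mapsto \mu_{s,t}$, such that $\sum_{i\in S}\mu_{s,t}(i)\mu_{r,i}=\sum_{j\in S}\mu_{r,s}(j)\mu_{j,t}$ for all $r,s,t\in S$. Such a pair is finitary if $\kappa=\aleph_0$, $\mu_{r,s}(t)\neq\aleph_0$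 for all $r,s,t\in S$, and $\{t\in S:\mu_{r,s}(t)\neq0\}$ is finite for all $r,s\in S$. *)

(* Defs.v *)
From HB Require Import structures.
From mathcomp Require Import all_boot all_order all_algebra.
From Stdlib Require Import ClassicalEpsilon.
Set Implicit Arguments. Unset Strict Implicit. Unset Printing Implicit Defensive.
Import GRing.Theory.
Local Open Scope ring_scope.

Record LinCat (k : fieldType) := LinCatMk {
  lc_ob :> Type;
  lc_hom : lc_ob -> lc_ob -> lmodType k;
  lc_comp : forall X Y Z, lc_hom Y Z -> lc_hom X Y -> lc_hom X Z;
  lc_id : forall X, lc_hom X X;
  lc_compA : forall X Y Z W (f : lc_hom Z W) (g : lc_hom Y Z) (h : lc_hom X Y),
    lc_comp f (lc_comp g h) = lc_comp (lc_comp f g) h;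
  lc_comp1f : forall X Y (f : lc_hom X Y), lc_comp (lc_id Y) f = f;
  lc_compf1 : forall X Y (f : lc_hom X Y), lc_comp f (lc_id X) = f;
  lc_compDl : forall X Y Z (a : k) (f g : lc_hom Y Z) (h : lc_hom X Y),
    lc_comp (a *: f + g) h = a *: lc_comp f h + lc_comp g h;
  lc_compDr : forall X Y Z (a : k) (f : lc_hom Y Z) (g h : lc_hom X Y),
    lc_comp f (a *: g + h) = a *: lc_comp f g + lc_comp f h
}.
Arguments lc_hom {k} C X Y : rename.
Arguments lc_comp {k C X Y Z} f g : rename.
Arguments lc_id {k C} X : rename.

Section LinCatDefs.
Variables (k : fieldType) (C : LinCat k).

Definition hcast (X X' Y Y' : C) (e1 : X = X') (e2 : Y = Y') (f : lc_hom C X Y)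
  : lc_hom C X' Y' :=
  match e1 in _ = X0 return lc_hom C X0 Y' with
  | erefl => match e2 in _ = Y0 return lc_hom C X Y0 with erefl => f end
  end.

Definition lc_iso (X Y : C) : Prop :=
  exists (f : lc_hom C X Y) (g : lc_hom C Y X),
    lc_comp g f = lc_id X /\ lc_comp f g = lc_id Y.

Definition is_zero (X : C) : Prop := lc_id X = 0.

Definition is_dsum (X : C) (n : nat) (Y : 'I_n -> C) : Prop :=
  exists (inj : forall m, lc_hom C (Y m) X) (prj : forall m, lc_hom C X (Y m)),
    (forall m, lc_comp (prj m) (inj m) = lc_id (Y m)) /\
    (forall m m', m != m' -> lc_comp (prj m') (inj m) = 0) /\
    \sum_(m < n) lc_comp (inj m) (prj m) = lc_id X.

Definition pair_fam (X Y : C) : 'I_2 -> C := fun m => if m == ord0 then X else Y.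

Definition additive : Prop :=
  (exists Z : C, is_zero Z) /\ forall X Y : C, exists Z, is_dsum Z (pair_fam X Y).

Definition local_end (X : C) : Prop :=
  lc_id X <> 0 /\
  forall f : lc_hom C X X,
    (exists g, lc_comp g f = lc_id X /\ lc_comp f g = lc_id X) \/
    (exists g, lc_comp g (lc_id X - f) = lc_id X /\ lc_comp (lc_id X - f) g = lc_id X).

Definition krull_schmidt : Prop :=
  additive /\
  forall X : C, exists n (Y : 'I_n -> C), is_dsum X Y /\ forall m, local_end (Y m).

Definition idempotent_split : Prop :=
  forall (X : C) (e : lc_hom C X X), lc_comp e e = e ->
    exists (Y : C) (r : lc_hom C X Y) (s : lc_hom C Y X),
      lc_comp s r = e /\ lc_comp r s = lc_id Y.

Definition indecomposable (X : C) : Prop :=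
  ~ is_zero X /\ forall Y : 'I_2 -> C, is_dsum X Y -> exists m, is_zero (Y m).

End LinCatDefs.

Record TwoCat (k : fieldType) := TwoCatMk {
  tc_ob : Type;
  tc_hom : tc_ob -> tc_ob -> LinCat k;
  tc_id1 : forall i, tc_hom i i;
  (* tc_c1 F G = F o G  for G : i -> j, F : j -> l *)
  tc_c1 : forall i j l, tc_hom j l -> tc_hom i j -> tc_hom i l;
  tc_c2 : forall i j l (F F' : tc_hom j l) (G G' : tc_hom i j),
    lc_hom _ F F' -> lc_hom _ G G' -> lc_hom _ (tc_c1 F G) (tc_c1 F' G');
  tc_c1A : forall i j l m (F : tc_hom l m) (G : tc_hom j l) (H : tc_hom i j),
    tc_c1 (tc_c1 F G) H = tc_c1 F (tc_c1 G H);
  tc_c11f : forall i j (F : tc_hom i j), tc_c1 (tc_id1 j) F = F;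
  tc_c1f1 : forall i j (F : tc_hom i j), tc_c1 F (tc_id1 i) = F;
  tc_c2A : forall i j l m (F F' : tc_hom l m) (G G' : tc_hom j l) (H H' : tc_hom i j)
      (a : lc_hom _ F F') (b : lc_hom _ G G') (c : lc_hom _ H H'),
    hcast (tc_c1A F G H) (tc_c1A F' G' H') (tc_c2 (tc_c2 a b) c) = tc_c2 a (tc_c2 b c);
  tc_c21f : forall i j (F F' : tc_hom i j) (a : lc_hom _ F F'),
    hcast (tc_c11f F) (tc_c11f F') (tc_c2 (lc_id (tc_id1 j)) a) = a;
  tc_c2f1 : forall i j (F F' : tc_hom i j) (a : lc_hom _ F F'),
    hcast (tc_c1f1 F) (tc_c1f1 F') (tc_c2 a (lc_id (tc_id1 i))) = a;
  tc_c2id : forall i j l (F : tc_hom j l) (G : tc_hom i j),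
    tc_c2 (lc_id F) (lc_id G) = lc_id (tc_c1 F G);
  tc_interchange : forall i j l (F F' F'' : tc_hom j l) (G G' G'' : tc_hom i j)
      (a : lc_hom _ F' F'') (b : lc_hom _ F F') (c : lc_hom _ G' G'') (d : lc_hom _ G G'),
    tc_c2 (lc_comp a b) (lc_comp c d) = lc_comp (tc_c2 a c) (tc_c2 b d)
}.
Arguments tc_hom {k} C i j : rename.
Arguments tc_c1 {k C i j l} F G : rename.
Arguments tc_c2 {k C i j l F F' G G'} a b : rename.

Section TwoCatDefs.
Variables (k : fieldType) (C : TwoCat k).

Definition hcomp_bilinear : Prop :=
  forall i j l (F F' : tc_hom C j l) (G G' : tc_hom C i j) (a : k),
    (forall (x y : lc_hom _ F F') (z : lc_hom _ G G'),
        tc_c2 (a *: x + y) z = a *: tc_c2 x z + tc_c2 y z) /\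
    (forall (x : lc_hom _ F F') (y z : lc_hom _ G G'),
        tc_c2 x (a *: y + z) = a *: tc_c2 x y + tc_c2 x z).

(* k-admissible: hom categories k-linear (built in), idempotent split,
   Krull-Schmidt; horizontal composition k-bilinear *)
Definition admissible : Prop :=
  (forall i j, idempotent_split (tc_hom C i j) /\ krull_schmidt (tc_hom C i j)) /\
  hcomp_bilinear.

Definition mor1 := { ij : tc_ob C * tc_ob C & tc_hom C ij.1 ij.2 }.
Definition pack i j (F : tc_hom C i j) : mor1 := existT _ (i, j) F.

Definition iso1 (X Y : mor1) : Prop :=
  exists i j (F G : tc_hom C i j), X = pack F /\ Y = pack G /\ lc_iso F G.

Definition indec1 (X : mor1) : Prop :=
  exists i j (F : tc_hom C i j), X = pack F /\ indecomposable F.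

Definition SC := { P : mor1 -> Prop | exists X, indec1 X /\ P = iso1 X }.

(* n is the multiplicity of the class R as a direct summand of F o G,
   F in class P, G in class Q (0 if P, Q are not composable) *)
Definition mult_rel (P Q R : SC) (n : nat) : Prop :=
  (exists i j l (F : tc_hom C j l) (G : tc_hom C i j),
      proj1_sig P (pack F) /\ proj1_sig Q (pack G) /\
      exists m (Y : 'I_m -> tc_hom C i l),
        is_dsum (tc_c1 F G) Y /\ (forall t, indecomposable (Y t)) /\
        exists A : {set 'I_m}, (forall t, t \in A <-> proj1_sig R (pack (Y t))) /\
                               n = #|A|)
  \/ (n = 0%N /\ ~ exists i j l (F : tc_hom C j l) (G : tc_hom C i j),
                     proj1_sig P (pack F) /\ proj1_sig Q (pack G)).

Definition mu (P Q R : SC) : nat := epsilon (inhabits 0%N) (mult_rel P Q R).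

End TwoCatDefs.

(* Card_{aleph_0}: Some n = finite cardinal n, None = aleph_0 *)
Definition card0 := option nat.

Definition cmul (a b : card0) : card0 :=
  match a, b with
  | Some x, Some y => Some (x * y)%N
  | Some 0, None => Some 0%N
  | None, Some 0 => Some 0%N
  | _, _ => None
  end.

Definition fin_support (I : Type) (f : I -> card0) : Prop :=
  exists m (g : 'I_m -> I), forall i, f i <> Some 0%N -> exists t, g t = i.

Definition csum_rel (I : Type) (f : I -> card0) (c : card0) : Prop :=
  match c with
  | Some n => (forall i, f i <> None) /\
      exists m (g : 'I_m -> I), injective g /\
        (forall i, f i <> Some 0%N -> exists t, g t = i) /\
        n = (\sum_(t < m) odflt 0%N (f (g t)))%N
  | None => (exists i, f i = None) \/ ~ fin_support f
  end.

Definition multisemigroup (S : Type) (mu : S -> S -> S -> card0) : Prop :=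
  inhabited S /\
  forall r s t u : S, exists c : card0,
    csum_rel (fun i => cmul (mu s t i) (mu r i u)) c /\
    csum_rel (fun j => cmul (mu r s j) (mu j t u)) c.

Definition finitary_multisemigroup (S : Type) (mu : S -> S -> S -> card0) : Prop :=
  multisemigroup mu /\
  (forall r s t, mu r s t <> None) /\
  (forall r s, fin_support (mu r s)).

(* Main.v *)
Require Import Defs.
From mathcomp Require Import all_boot all_algebra.
From Stdlib Require Import ClassicalEpsilon Classical Eqdep ProofIrrelevance FunctionalExtensionality PropExtensionality.
Set Implicit Arguments. Unset Strict Implicit. Unset Printing Implicit Defensive.
Import GRing.Theory.
Local Open Scope ring_scope.

Local Notation "f *c g" := (lc_comp f g) (at level 40, left associativity).
Local Notation "1_ X" := (lc_id X) (at level 0, X at level 0).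

Section Lin.
Variables (k : fieldType) (C : LinCat k).
Implicit Types X Y Z W : C.

Lemma compDl X Y Z (f g : lc_hom C Y Z) (h : lc_hom C X Y) : (f + g) *c h = f *c h + g *c h.
Proof. by have := lc_compDl 1 f g h; rewrite !scale1r. Qed.
Lemma compDr X Y Z (f : lc_hom C Y Z) (g h : lc_hom C X Y) : f *c (g + h) = f *c g + f *c h.
Proof. by have := lc_compDr 1 f g h; rewrite !scale1r. Qed.
Lemma comp0l X Y Z (h : lc_hom C X Y) : (0 : lc_hom C Y Z) *c h = 0.
Proof. have := compDl (0 : lc_hom C Y Z) 0 h; rewrite addr0 => H. by apply: (addrI (0 *c h)); rewrite addr0 -H. Qed.
Lemma comp0r X Y Z (h : lc_hom C Y Z) : h *c (0 : lc_hom C X Y) = 0.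
Proof. have := compDr h (0 : lc_hom C X Y) 0; rewrite addr0 => H. by apply: (addrI (h *c 0)); rewrite addr0 -H. Qed.
Lemma compNl X Y Z (f : lc_hom C Y Z) (h : lc_hom C X Y) : (- f) *c h = - (f *c h).
Proof. by have := lc_compDl (-1) f 0 h; rewrite !addr0 comp0l addr0 !scaleN1r. Qed.
Lemma compNr X Y Z (f : lc_hom C Y Z) (h : lc_hom C X Y) : f *c (- h) = - (f *c h).
Proof. by have := lc_compDr (-1) f h (0 : lc_hom C X Y); rewrite !addr0 comp0r addr0 !scaleN1r. Qed.
Lemma compBl X Y Z (f g : lc_hom C Y Z) (h : lc_hom C X Y) : (f - g) *c h = f *c h - g *c h.
Proof. by rewrite compDl compNl. Qed.
Lemma compBr X Y Z (f : lc_hom C Y Z) (g h : lc_hom C X Y) : f *c (g - h) = f *c g - f *c h.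
Proof. by rewrite compDr compNr. Qed.
Lemma comp_suml X Y Z (I : Type) (r : seq I) (P : pred I) (F : I -> lc_hom C Y Z) (h : lc_hom C X Y) :
  (\sum_(i <- r | P i) F i) *c h = \sum_(i <- r | P i) (F i *c h).
Proof. exact: (big_morph (fun f => f *c h) (fun f g => compDl f g h) (comp0l _ h)). Qed.
Lemma comp_sumr X Y Z (I : Type) (r : seq I) (P : pred I) (F : I -> lc_hom C X Y) (h : lc_hom C Y Z) :
  h *c (\sum_(i <- r | P i) F i) = \sum_(i <- r | P i) (h *c F i).
Proof. exact: (big_morph (fun f => h *c f) (fun f g => compDr h f g) (comp0r _ h)). Qed.
Definition compA := lc_compA.
Lemma comp1f X Y (f : lc_hom C X Y) : 1_Y *c f = f. Proof. exact: lc_comp1f. Qed.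
Lemma compf1 X Y (f : lc_hom C X Y) : f *c 1_X = f. Proof. exact: lc_compf1. Qed.

Definition unit_ X (f : lc_hom C X X) := exists g, g *c f = 1_X /\ f *c g = 1_X.

Lemma local_idem X (e : lc_hom C X X) : local_end X -> e *c e = e -> e = 0 \/ e = 1_X.
Proof.
move=> [_ H] ee; case: (H e) => [[g [g1 g2]]|[g [g1 g2]]].
  by right; rewrite -g1 -{2}ee compA g1 comp1f.
left; have : e *c (1_X - e) = 0 by rewrite compBr compf1 ee subrr.
by move=> h; rewrite -(compf1 e) -g2 compA h comp0l.
Qed.

Lemma local_leftinv X (a l : lc_hom C X X) : local_end X -> l *c a = 1_X -> unit_ a.
Proof.
move=> lX la; have ee : (a *c l) *c (a *c l) = a *c l by rewrite compA -(compA a l a) la compf1.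
case: (local_idem lX ee) => al; last by exists l.
exfalso; case: lX => nz _; apply: nz.
have H : (l *c a) *c (l *c a) = 0 by rewrite compA -(compA l a l) al comp0r comp0l.
by move: H; rewrite la comp1f.
Qed.

Lemma local_nz X : local_end X -> 1_X <> 0. Proof. by case. Qed.

Lemma local_add X (a b : lc_hom C X X) : local_end X -> unit_ (a + b) -> unit_ a \/ unit_ b.
Proof.
move=> lX [c [c1 c2]]; move: c1; rewrite compDr => H.
case: (lX) => _ /(_ (c *c a)) [[d [d1 _]]|[d [d1 _]]].
  by left; apply: (local_leftinv (l := d *c c)) => //; rewrite -compA.
right; apply: (local_leftinv (l := d *c c)) => //; rewrite -compA.
have -> : c *c b = 1_X - c *c a by rewrite -H addrAC subrr add0r.
exact: d1.
Qed.

Lemma local_sum X n (a : 'I_n -> lc_hom C X X) : local_end X ->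
  unit_ (\sum_(i < n) a i) -> exists s, unit_ (a s).
Proof.
move=> lX; elim: n a => [|n IH] a.
  rewrite big_ord0 => -[g [g1 _]]; exfalso; apply: (local_nz lX).
  by rewrite -g1 comp0r.
rewrite big_ord_recr /= => /(local_add lX) [/IH [s Hs]|Hs].
  by exists (widen_ord (leqnSn n) s).
by exists ord_max.
Qed.

Lemma unit_iso Y Z (q : lc_hom C Y Z) (p : lc_hom C Z Y) :
  local_end Y -> local_end Z -> unit_ (p *c q) ->
  exists qi, qi *c q = 1_Y /\ q *c qi = 1_Z.
Proof.
move=> lY lZ [g [g1 g2]].
have ee : (q *c (g *c p)) *c (q *c (g *c p)) = q *c (g *c p).
  rewrite !compA -(compA (q *c g) p q) -(compA (q *c g) (p *c q) g) g2 compf1.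
  done.
case: (local_idem lZ ee) => He.
  exfalso; apply: (local_nz lY).
  have H : (g *c (p *c q)) *c (g *c (p *c q)) = 0.
    rewrite !compA -(compA (g *c p) q g) -(compA (g *c p) (q *c g) p) -(compA q g p).
    by rewrite He comp0r comp0l.
  by move: H; rewrite g1 comp1f.
by exists (g *c p); split => //; rewrite -compA.
Qed.

Section Dec.
Variables (X : C) (e : lc_hom C X X) (I : finType) (Y : I -> C)
  (inj : forall t, lc_hom C (Y t) X) (prj : forall t, lc_hom C X (Y t)).
Definition dec :=
  (forall m, prj m *c inj m = 1_(Y m)) /\
  (forall m m', m != m' -> prj m' *c inj m = 0) /\
  \sum_m inj m *c prj m = e.

Hypothesis D : dec.
Lemma dec_inj t : e *c inj t = inj t.
Proof.
case: D => [d1 [d2 <-]]; rewrite comp_suml (bigD1 t) //= big1 ?addr0.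
  by rewrite -compA d1 compf1.
by move=> t' /negPf nt; rewrite -compA d2 ?comp0r // eq_sym nt.
Qed.
Lemma dec_prj t : prj t *c e = prj t.
Proof.
case: D => [d1 [d2 <-]]; rewrite comp_sumr (bigD1 t) //= big1 ?addr0.
  by rewrite compA d1 comp1f.
by move=> t' /negPf nt; rewrite compA d2 ?comp0l // nt.
Qed.
Lemma dec_idem : e *c e = e.
Proof.
case: (D) => [d1 [d2 He]]; transitivity (\sum_t inj t *c prj t); last exact He.
rewrite -{2}He comp_sumr.
by apply: eq_bigr => t _; rewrite compA dec_inj.
Qed.
End Dec.


Lemma dec_transport X (f g u v : lc_hom C X X) (I : finType) (Z : I -> C) inj prj :
  dec g inj prj -> u *c v = g -> v *c g *c u = f ->
  @dec X f I Z (fun i => v *c inj i) (fun i => prj i *c u).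
Proof.
move=> D uv vgu; have [d1 [d2 dS]] := D; split; last split.
- by move=> i; rewrite -!compA (compA u v) uv (dec_inj D).
- by move=> i i' nii; rewrite -!compA (compA u v) uv (dec_inj D) d2.
rewrite -vgu -dS comp_sumr comp_suml; apply: eq_bigr => i _.
by rewrite !compA.
Qed.

Lemma KS_ord (w : C -> nat) (Hw : forall A B, lc_iso A B -> w A = w B) m :
  forall n X (e : lc_hom C X X) (Y : 'I_m -> C) inj prj (Z : 'I_n -> C) inj' prj',
  @dec X e _ Y inj prj -> @dec X e _ Z inj' prj' ->
  (forall t, local_end (Y t)) -> (forall s, local_end (Z s)) ->
  (\sum_t w (Y t) = \sum_s w (Z s))%N.
Proof.
elim: m => [|m IH] n X e Y inj prj Z inj' prj' DY DZ lY lZ.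
  case: n Z inj' prj' DZ lZ => [|n] Z inj' prj' DZ lZ; first by rewrite !big_ord0.
  exfalso; have := dec_inj DZ ord0; case: DY => [_ [_ HY]].
  rewrite -HY big_ord0 comp0l => H0; apply: (local_nz (lZ ord0)).
  by case: DZ => [d1 _]; rewrite -(d1 ord0) -H0 comp0r.
have [dy1 [dy2 dyS]] := DY; have [dz1 [dz2 dzS]] := DZ.
have E : \sum_(s < n) (prj ord0 *c inj' s) *c (prj' s *c inj ord0) = prj ord0 *c inj ord0.
  rewrite -{2}(dec_prj DY ord0) -dzS comp_sumr comp_suml; apply: eq_bigr => s _.
  by rewrite !compA.
have [s Hs] : exists s, unit_ ((prj ord0 *c inj' s) *c (prj' s *c inj ord0)).
  apply: local_sum (lY ord0) _; rewrite E dy1; exists (1_(Y ord0)).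
  by rewrite comp1f.
have [qi [qi1 qi2]] := unit_iso (lY ord0) (lZ s) Hs.
have [n' En] : exists n', n = n'.+1 by case: n s {E Hs qi qi1 qi2 Z inj' prj' DZ lZ dz1 dz2 dzS} => [[]|n'] // _; exists n'.
subst n.
set h := qi *c prj' s.
set f := e - inj ord0 *c prj ord0.
set g := e - inj ord0 *c h.
have Ei0 := dec_inj DY ord0.
have hi0 : h *c inj ord0 = 1_(Y ord0) by rewrite /h -compA qi1.
have DYr : @dec X f _ (fun i => Y (lift ord0 i)) (fun i => inj (lift ord0 i)) (fun i => prj (lift ord0 i)).
  split; first by move=> i; apply: dy1.
  split; first by move=> i i' nii; apply: dy2; rewrite (inj_eq (@lift_inj _ ord0)).
  by rewrite /f -dyS big_ord_recl /= addrAC subrr add0r.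
have gZ j : g *c inj' (lift s j) = inj' (lift s j).
  rewrite /g compBl (dec_inj DZ) -compA /h -compA dz2 ?comp0r ?comp0r ?subr0 //.
  by rewrite eq_sym neq_lift.
have sg : prj' s *c g = 0.
  rewrite /g compBr (dec_prj DZ) /h !compA qi2 comp1f.
  by rewrite subrr.
have DW : @dec X g _ (fun i => Z (lift s i)) (fun i => inj' (lift s i)) (fun i => prj' (lift s i) *c g).
  split; first by move=> i; rewrite -compA gZ dz1.
  split; first by move=> i i' nii; rewrite -compA gZ dz2 // (inj_eq (@lift_inj _ s)).
  have -> : \sum_(i < n') inj' (lift s i) *c (prj' (lift s i) *c g) =
            (\sum_(i < n') inj' (lift s i) *c prj' (lift s i)) *c g.
    by rewrite comp_suml; apply: eq_bigr => i _; rewrite compA.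
  have -> : \sum_(i < n') inj' (lift s i) *c prj' (lift s i) = e - inj' s *c prj' s.
    by rewrite -dzS (bigD1_ord s) //= addrAC subrr add0r.
  rewrite compBl -compA sg comp0r subr0 /g compBr (dec_idem DY) compA Ei0.
  by [].
have fe : f *c e = f by rewrite /f compBl (dec_idem DY) -compA (dec_prj DY).
have ge : g *c e = g by rewrite /g compBl (dec_idem DY) -!compA (dec_prj DZ).
have fi0 : f *c inj ord0 = 0 by rewrite /f compBl Ei0 -compA dy1 compf1 subrr.
have gi0 : g *c inj ord0 = 0 by rewrite /g compBl Ei0 -compA hi0 compf1 subrr.
have fg : f *c g = f by rewrite {1}/g compBr fe compA fi0 comp0l subr0.
have gf : g *c f = g by rewrite {1}/f compBr ge compA gi0 comp0l subr0.
have fgg : f *c g *c g = f by rewrite !fg.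
have DZr := dec_transport DW gf fgg.
have IHr := IH n'.+1.-1 X f _ _ _ _ _ _ DYr DZr (fun i => lY _) (fun i => lZ _).
rewrite big_ord_recl (bigD1_ord s) //= IHr.
congr (_ + _)%N; apply: Hw; exists (prj' s *c inj ord0), qi; split => //.
Qed.


Lemma sum_enum (I : finType) (F : I -> nat) :
  (\sum_(i : I) F i = \sum_(t < #|I|) F (enum_val t))%N.
Proof. rewrite -(big_enum_val (A := I)). by apply: eq_bigl => i; rewrite inE. Qed.

Lemma dec_enum X (e : lc_hom C X X) (I : finType) (Y : I -> C) inj prj :
  @dec X e I Y inj prj ->
  @dec X e 'I_#|I| (fun t => Y (enum_val t)) (fun t => inj (enum_val t)) (fun t => prj (enum_val t)).
Proof.
move=> [d1 [d2 dS]]; split => //; split.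
  by move=> t t' ntt; apply: d2; rewrite (inj_eq enum_val_inj).
rewrite -dS.
have -> : \sum_m inj m *c prj m = \sum_(m in I) inj m *c prj m.
  by apply: eq_bigl => i; rewrite inE.
by rewrite (big_enum_val (A := I)).
Qed.

Lemma KS_fin (w : C -> nat) (Hw : forall A B, lc_iso A B -> w A = w B)
  X (e : lc_hom C X X) (I J : finType) (Y : I -> C) inj prj (Z : J -> C) inj' prj' :
  @dec X e _ Y inj prj -> @dec X e _ Z inj' prj' ->
  (forall t, local_end (Y t)) -> (forall s, local_end (Z s)) ->
  (\sum_t w (Y t) = \sum_s w (Z s))%N.
Proof.
move=> DY DZ lY lZ; rewrite (sum_enum (fun t => w (Y t))) (sum_enum (fun t => w (Z t))).
exact: (KS_ord Hw (dec_enum DY) (dec_enum DZ)).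
Qed.

Lemma unit_conj X Y (a : lc_hom C X Y) (b : lc_hom C Y X) (f : lc_hom C Y Y) :
  b *c a = 1_X -> a *c b = 1_Y -> unit_ (b *c f *c a) -> unit_ f.
Proof.
move=> ba ab [g [g1 g2]]; exists (a *c g *c b); split.
  transitivity ((a *c (g *c (b *c f *c a))) *c b); last by rewrite g1 compf1.
  by rewrite !compA -(compA (a *c g *c b *c f) a b) ab compf1.
transitivity ((a *c ((b *c f *c a) *c g)) *c b); last by rewrite g2 compf1.
by rewrite !compA ab comp1f.
Qed.


Lemma local_iso X Y : lc_iso X Y -> local_end X -> local_end Y.
Proof.
move=> [a [b [ba ab]]] [nz H]; split.
  move=> Y0; apply: nz; by rewrite -ba -(comp1f a) Y0 comp0l comp0r.
move=> f; case: (H (b *c f *c a)) => Hu; [left|right]; apply: (unit_conj ba ab) => //.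
by rewrite compBr compBl compf1 ba.
Qed.

Lemma local_indec X : local_end X -> indecomposable X.
Proof.
move=> lX; split; first exact: (local_nz lX).
move=> Y [inj [prj [d1 [d2 dS]]]].
have ee : (inj ord0 *c prj ord0) *c (inj ord0 *c prj ord0) = inj ord0 *c prj ord0.
  by rewrite compA -(compA (inj ord0) (prj ord0) (inj ord0)) d1 compf1.
case: (local_idem lX ee) => He.
  exists ord0; rewrite /is_zero -(d1 ord0).
  transitivity (prj ord0 *c (inj ord0 *c prj ord0) *c inj ord0); last by rewrite He comp0r comp0l.
  by rewrite compA d1 comp1f.
exists ord_max; rewrite /is_zero -(d1 ord_max) -(comp1f (inj ord_max)) -He compA.
by rewrite !compA d2 ?comp0l.
Qed.


Lemma indec_local X : krull_schmidt C -> idempotent_split C -> indecomposable X -> local_end X.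
Proof.
move=> [_ KS] IS [nzX HX].
have [n [Z [[inj [prj [d1 [d2 dS]]]] lZ]]] := KS X.
case: n Z inj prj d1 d2 dS lZ => [|n] Z inj prj d1 d2 dS lZ.
  by exfalso; apply: nzX; rewrite /is_zero -dS big_ord0.
set p := inj ord0 *c prj ord0.
have pp : p *c p = p by rewrite /p compA -(compA (inj ord0) (prj ord0) (inj ord0)) d1 compf1.
have ee : (1_X - p) *c (1_X - p) = 1_X - p.
  by rewrite compBl comp1f compBr compf1 pp subrr subr0.
have [W [r [s [sr rs]]]] := IS X _ ee.
pose inj2 (m : 'I_2) : lc_hom C (pair_fam (Z ord0) W m) X :=
  if m == ord0 as b return lc_hom C (if b then Z ord0 else W) X then inj ord0 else s.
pose prj2 (m : 'I_2) : lc_hom C X (pair_fam (Z ord0) W m) :=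
  if m == ord0 as b return lc_hom C X (if b then Z ord0 else W) then prj ord0 else r.
have rp : r *c p = 0.
  have H : r *c (s *c r) = r by rewrite compA rs comp1f.
  move/eqP: H; rewrite sr compBr compf1 subr_eq addrC -subr_eq subrr eq_sym.
  by move/eqP.
have ps : p *c s = 0.
  have H : (s *c r) *c s = s by rewrite -compA rs compf1.
  move/eqP: H; rewrite sr compBl comp1f subr_eq addrC -subr_eq subrr eq_sym.
  by move/eqP.
have ri0 : r *c inj ord0 = 0.
  by rewrite -(compf1 (inj ord0)) -(d1 ord0) !compA -(compA r) rp comp0l.
have p0s : prj ord0 *c s = 0.
  by rewrite -(comp1f (prj ord0)) -(d1 ord0) -!compA (compA (inj ord0)) ps comp0r.
have D : is_dsum X (pair_fam (Z ord0) W).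
  exists inj2, prj2; split; last split.
  - by case=> [[|[|//]]] Hm; rewrite /prj2 /inj2 /pair_fam /=.
  - by case=> [[|[|//]]] Hm; case=> [[|[|//]]] Hm'; rewrite /prj2 /inj2 /pair_fam /=.
  - by rewrite !big_ord_recl big_ord0 /prj2 /inj2 /pair_fam /= addr0 sr addrC subrK.
have [m Hm] := HX _ D.
case: m Hm => [[|[|//]]] Hm /= Z0.
  by exfalso; apply: (local_nz (lZ ord0)).
apply: (local_iso _ (lZ ord0)); exists (inj ord0), (prj ord0); split; first exact: d1.
have : s *c r = 0 by rewrite -(comp1f r) Z0 comp0l comp0r.
by rewrite sr => /eqP; rewrite subr_eq0 eq_sym => /eqP.
Qed.


Lemma dec_iso X X' (a : lc_hom C X X') (b : lc_hom C X' X) (I : finType) (Y : I -> C) inj prj :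
  b *c a = 1_X -> a *c b = 1_X' -> @dec X 1_X I Y inj prj ->
  @dec X' 1_X' I Y (fun t => a *c inj t) (fun t => prj t *c b).
Proof.
move=> ba ab [d1 [d2 dS]]; split; last split.
- by move=> t; rewrite -compA (compA b) ba comp1f.
- by move=> t t' ntt; rewrite -compA (compA b) ba comp1f d2.
rewrite -ab -{2}(compf1 a) -dS comp_sumr comp_suml; apply: eq_bigr => t _.
by rewrite !compA.
Qed.

Lemma dec_flat X (I : finType) (J : I -> finType) (V : I -> C) inj prj
  (W : forall x, J x -> C) (inj2 : forall x y, lc_hom C (W x y) (V x))
  (prj2 : forall x y, lc_hom C (V x) (W x y)) :
  @dec X 1_X I V inj prj -> (forall x, @dec (V x) 1_(V x) (J x) (W x) (inj2 x) (prj2 x)) ->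
  @dec X 1_X {x : I & J x} (fun p => W (tag p) (tagged p))
    (fun p => inj (tag p) *c inj2 (tag p) (tagged p))
    (fun p => prj2 (tag p) (tagged p) *c prj (tag p)).
Proof.
move=> [d1 [d2 dS]] D2; split; last split.
- case=> x y /=; have [e1 [_ _]] := D2 x.
  by rewrite -compA (compA (prj x)) d1 comp1f e1.
- case=> x y [x' y'] /= nxy; have [e1 [e2 _]] := D2 x.
  case: (eqVneq x x') => [Exx|nx].
    subst x'; rewrite -compA (compA (prj x)) d1 comp1f e2 //.
    by apply: contraNneq nxy => ->.
  by rewrite -compA (compA (prj x')) d2 // comp0l comp0r.
rewrite -dS -(sig_big_dep (fun x => true) (fun x y => true)
  (fun x y => inj x *c inj2 x y *c (prj2 x y *c prj x))) /=.
apply: eq_bigr => x _; have [_ [_ eS]] := D2 x.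
transitivity (inj x *c (\sum_j inj2 x j *c prj2 x j) *c prj x); last by rewrite eS compf1.
rewrite comp_sumr comp_suml; apply: eq_bigr => y _.
by rewrite !compA.
Qed.


Lemma iso_refl X : lc_iso X X.
Proof. by exists 1_X, 1_X; rewrite comp1f. Qed.
Lemma iso_sym X Y : lc_iso X Y -> lc_iso Y X.
Proof. by move=> [a [b [ba ab]]]; exists b, a. Qed.
Lemma iso_trans X Y Z : lc_iso X Y -> lc_iso Y Z -> lc_iso X Z.
Proof.
move=> [a [b [ba ab]]] [c [d [dc cd]]]; exists (c *c a), (b *c d); split.
  by rewrite -compA (compA d) dc comp1f.
by rewrite -compA (compA a) ab comp1f.
Qed.


Lemma KS_fin_eq (w : C -> nat) (Hw : forall A B, lc_iso A B -> w A = w B)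
  X X' (E : X = X') (I J : finType) (Y : I -> C) inj prj (Z : J -> C) inj' prj' :
  @dec X 1_X _ Y inj prj -> @dec X' 1_X' _ Z inj' prj' ->
  (forall t, local_end (Y t)) -> (forall s, local_end (Z s)) ->
  (\sum_t w (Y t) = \sum_s w (Z s))%N.
Proof. case: X' / E inj' prj'; exact: KS_fin. Qed.

End Lin.

Section Two.
Variables (k : fieldType) (C : TwoCat k).
Hypothesis HB : hcomp_bilinear C.

Lemma c2Dr i j l (F F' : tc_hom C j l) (G G' : tc_hom C i j) (x : lc_hom _ F F') (y z : lc_hom _ G G') :
  tc_c2 x (y + z) = tc_c2 x y + tc_c2 x z.
Proof. by have [_ H] := HB F F' G G' 1; move: (H x y z); rewrite !scale1r. Qed.
Lemma c2Dl i j l (F F' : tc_hom C j l) (G G' : tc_hom C i j) (x y : lc_hom _ F F') (z : lc_hom _ G G') :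
  tc_c2 (x + y) z = tc_c2 x z + tc_c2 y z.
Proof. by have [H _] := HB F F' G G' 1; move: (H x y z); rewrite !scale1r. Qed.
Lemma c20r i j l (F F' : tc_hom C j l) (G G' : tc_hom C i j) (x : lc_hom _ F F') :
  tc_c2 x (0 : lc_hom _ G G') = 0.
Proof. have := c2Dr x (0 : lc_hom _ G G') 0; rewrite addr0 => H.
by apply: (addrI (tc_c2 x (0 : lc_hom _ G G'))); rewrite addr0 -H. Qed.
Lemma c20l i j l (F F' : tc_hom C j l) (G G' : tc_hom C i j) (z : lc_hom _ G G') :
  tc_c2 (0 : lc_hom _ F F') z = 0.
Proof. have := c2Dl (0 : lc_hom _ F F') 0 z; rewrite addr0 => H.
by apply: (addrI (tc_c2 (0 : lc_hom _ F F') z)); rewrite addr0 -H. Qed.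
Lemma c2_sumr i j l (F F' : tc_hom C j l) (G G' : tc_hom C i j) (x : lc_hom _ F F')
  (I : Type) (r : seq I) (P : pred I) (f : I -> lc_hom _ G G') :
  tc_c2 x (\sum_(t <- r | P t) f t) = \sum_(t <- r | P t) tc_c2 x (f t).
Proof. exact: (big_morph (fun y => tc_c2 x y) (c2Dr x) (c20r _ _ x)). Qed.
Lemma c2_suml i j l (F F' : tc_hom C j l) (G G' : tc_hom C i j) (z : lc_hom _ G G')
  (I : Type) (r : seq I) (P : pred I) (f : I -> lc_hom _ F F') :
  tc_c2 (\sum_(t <- r | P t) f t) z = \sum_(t <- r | P t) tc_c2 (f t) z.
Proof. exact: (big_morph (fun y => tc_c2 y z) (fun a b => c2Dl a b z) (c20l _ _ z)). Qed.

Lemma dec_left i j l (F : tc_hom C j l) (G : tc_hom C i j) (I : finType) Y inj prj :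
  @dec _ _ G 1_G I Y inj prj ->
  @dec _ _ (tc_c1 F G) 1_(tc_c1 F G) I (fun t => tc_c1 F (Y t))
    (fun t => tc_c2 1_F (inj t)) (fun t => tc_c2 1_F (prj t)).
Proof.
move=> [d1 [d2 dS]]; split; last split.
- by move=> t; rewrite -tc_interchange comp1f d1 tc_c2id.
- by move=> t t' nt; rewrite -tc_interchange comp1f d2 // c20r.
rewrite -tc_c2id -dS c2_sumr; apply: eq_bigr => t _.
by rewrite -tc_interchange comp1f.
Qed.

Lemma dec_right i j l (F : tc_hom C j l) (G : tc_hom C i j) (I : finType) Y inj prj :
  @dec _ _ F 1_F I Y inj prj ->
  @dec _ _ (tc_c1 F G) 1_(tc_c1 F G) I (fun t => tc_c1 (Y t) G)
    (fun t => tc_c2 (inj t) 1_G) (fun t => tc_c2 (prj t) 1_G).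
Proof.
move=> [d1 [d2 dS]]; split; last split.
- by move=> t; rewrite -tc_interchange comp1f d1 tc_c2id.
- by move=> t t' nt; rewrite -tc_interchange comp1f d2 // c20l.
rewrite -tc_c2id -dS c2_suml; apply: eq_bigr => t _.
by rewrite -tc_interchange comp1f.
Qed.

Lemma iso_c1 i j l (F F' : tc_hom C j l) (G G' : tc_hom C i j) :
  lc_iso F F' -> lc_iso G G' -> lc_iso (tc_c1 F G) (tc_c1 F' G').
Proof.
move=> [a [b [ba ab]]] [c [d [dc cd]]]; exists (tc_c2 a c), (tc_c2 b d).
by rewrite -!tc_interchange ba ab dc cd !tc_c2id.
Qed.

End Two.

Definition pb (P : Prop) : bool := if excluded_middle_informative P then true else false.
Lemma pbP P : reflect P (pb P).
Proof. by rewrite /pb; case: excluded_middle_informative => h; constructor. Qed.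
Definition ind (P : Prop) : nat := pb P.

Section Cls.
Variables (k : fieldType) (C : TwoCat k).

Definition inP (P : SC C) i j (F : tc_hom C i j) := proj1_sig P (pack F).

Lemma pack_ij i j (F : tc_hom C i j) i' j' (F' : tc_hom C i' j') : pack F = pack F' -> i = i' /\ j = j'.
Proof. by move/(f_equal (@projT1 _ _)) => [-> ->]. Qed.
Lemma pack_inj i j (F F' : tc_hom C i j) : pack F = pack F' -> F = F'.
Proof. exact: EqdepTheory.inj_pair2. Qed.

Lemma iso1_ij i j (G : tc_hom C i j) i' j' (F : tc_hom C i' j') :
  iso1 (pack G) (pack F) -> i' = i /\ j' = j.
Proof.
move=> [a [b [G1 [F1 [/pack_ij [e1 e2] [/pack_ij [e3 e4] _]]]]]].
by rewrite e1 e2 e3 e4.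
Qed.
Lemma iso1_packE i j (G F : tc_hom C i j) : iso1 (pack G) (pack F) <-> lc_iso G F.
Proof.
split; last by move=> h; exists i, j, G, F.
move=> [a [b [G1 [F1 [e1 [e2 h]]]]]].
have [ea eb] := pack_ij e1; subst a b.
by rewrite (pack_inj e1) (pack_inj e2).
Qed.
Lemma iso1_trans (X Y Z : mor1 C) : iso1 X Y -> iso1 Y Z -> iso1 X Z.
Proof.
move=> [a [b [F1 [F2 [-> [-> h1]]]]]] [a' [b' [F3 [F4 [e [-> h2]]]]]].
have [ea eb] := pack_ij e; subst a' b'.
rewrite (pack_inj e) in h1.
exists a, b, F1, F4; split => //; split => //; exact: iso_trans h1 h2.
Qed.
Lemma iso1_sym (X Y : mor1 C) : iso1 X Y -> iso1 Y X.
Proof. move=> [a [b [F1 [F2 [-> [-> h1]]]]]]; exists a, b, F2, F1; split => //; split => //; exact: iso_sym. Qed.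

Lemma classP (P : SC C) : exists i j (G : tc_hom C i j), indecomposable G /\ proj1_sig P = iso1 (pack G).
Proof.
case: P => p [X [[a [b [G [EX indG]]]] Ep]] /=.
by exists a, b, G; rewrite Ep EX.
Qed.

Lemma inP_ij P i j (F : tc_hom C i j) i' j' (F' : tc_hom C i' j') :
  inP P F -> inP P F' -> i' = i /\ j' = j.
Proof.
have [a [b [G [_ E]]]] := classP P; rewrite /inP E => /iso1_ij [-> ->] /iso1_ij [-> ->].
by [].
Qed.

Lemma inP_iso P i j (F F' : tc_hom C i j) : inP P F -> lc_iso F F' -> inP P F'.
Proof.
have [a [b [G [_ E]]]] := classP P; rewrite /inP E => h1 h2.
apply: (iso1_trans h1); exact/iso1_packE.
Qed.

Definition cls i j (G : tc_hom C i j) (h : indecomposable G) : SC C :=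
  exist _ (iso1 (pack G)) (ex_intro _ (pack G) (conj (ex_intro _ i (ex_intro _ j (ex_intro _ G (conj erefl h)))) erefl)).

Lemma inP_cls i j (G : tc_hom C i j) (h : indecomposable G) : inP (cls h) G.
Proof. exact/iso1_packE/iso_refl. Qed.

Lemma cls_eq P i j (G : tc_hom C i j) (h : indecomposable G) : inP P G -> P = cls h.
Proof.
case: P => p hp; rewrite /inP /=.
have [a [b [G0 [_ E]]]] := classP (exist _ p hp); rewrite /= in E; subst p => h0.
have E : iso1 (pack G0) = iso1 (pack G).
  apply: functional_extensionality => X; apply: propositional_extensionality; split.
    by apply: iso1_trans; apply: iso1_sym.
  exact: iso1_trans.
move: hp; rewrite E => hp; rewrite /cls; congr exist; exact: proof_irrelevance.
Qed.

Definition composable (P Q : SC C) := exists i j l (F : tc_hom C j l) (G : tc_hom C i j), inP P F /\ inP Q G.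

End Cls.

Section Mu.
Variables (k : fieldType) (C : TwoCat k).
Hypothesis HA : admissible C.

Lemma ks i j : krull_schmidt (tc_hom C i j). Proof. by case: (HA.1 i j). Qed.
Lemma isp i j : idempotent_split (tc_hom C i j). Proof. by case: (HA.1 i j). Qed.

Lemma indec_loc i j (F : tc_hom C i j) : indecomposable F -> local_end F.
Proof. exact: (@indec_local _ (tc_hom C i j) F (ks i j) (@isp i j)). Qed.

Lemma decomp i j (X : tc_hom C i j) : exists m (Y : 'I_m -> tc_hom C i j) inj prj,
  @dec _ _ X 1_X _ Y inj prj /\ forall t, local_end (Y t).
Proof.
have [_ K] := ks i j; have [m [Y [[inj [prj D]] lY]]] := K X.
by exists m, Y, inj, prj.
Qed.

Lemma ind_iso (R : SC C) i j (A B : tc_hom C i j) : lc_iso A B -> ind (inP R A) = ind (inP R B).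
Proof.
move=> h; rewrite /ind; case: pbP => [a|na]; case: pbP => [b|nb] //.
  by case: nb; apply: inP_iso a h.
by case: na; apply: inP_iso b (iso_sym h).
Qed.

Lemma card_ind (I : finType) (A : {set I}) (Pr : I -> Prop) :
  (forall t, t \in A <-> Pr t) -> #|A| = (\sum_t ind (Pr t))%N.
Proof.
move=> h; rewrite -sum1_card big_mkcond /=; apply: eq_bigr => t _.
rewrite /ind; case: pbP => p.
  by have /h -> := p.
by case: ifP => // /h.
Qed.

Lemma mult_rel_ex (P Q R : SC C) : exists n, mult_rel P Q R n.
Proof.
case: (classic (composable P Q)) => [[i [j [l [F [G [hF hG]]]]]]|nc]; last first.
  by exists 0%N; right.
have [m [Y [inj [prj [D lY]]]]] := decomp (tc_c1 F G).
exists #|[set t | pb (inP R (Y t))]|; left; exists i, j, l, F, G; split => //; split => //.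
exists m, Y; split; first by exists inj, prj.
split; first by move=> t; apply: local_indec.
exists [set t | pb (inP R (Y t))]; split => // t; rewrite inE.
by split => /pbP.
Qed.

Lemma mu_spec (P Q R : SC C) i j l (F : tc_hom C j l) (G : tc_hom C i j) :
  inP P F -> inP Q G ->
  forall (I : finType) Y inj prj, @dec _ _ (tc_c1 F G) 1_(tc_c1 F G) I Y inj prj ->
  (forall t, local_end (Y t)) -> mu P Q R = (\sum_t ind (inP R (Y t)))%N.
Proof.
move=> hF hG I Y inj prj D lY.
have := epsilon_spec (inhabits 0%N) (mult_rel P Q R) (mult_rel_ex P Q R).
rewrite -/(mu P Q R); case; last first.
  by move=> [_ []]; exists i, j, l, F, G.
move=> [i' [j' [l' [F' [G' [hF' [hG' [m [Y' [[inj' [prj' D']] [indY [A [hA ->]]]]]]]]]]]]].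
have [e1 e2] := inP_ij hF hF'; subst j' l'.
have [e1 e2] := inP_ij hG hG'; subst i'.
have isoF : lc_iso F' F.
  have [a [b [G0 [_ E]]]] := classP P.
  move: hF hF'; rewrite /inP E => h1 h2.
  have [ea eb] := iso1_ij h1; subst a b.
  move/iso1_packE: h1 => h1; move/iso1_packE: h2 => h2.
  exact: iso_trans (iso_sym h2) h1.
have isoG : lc_iso G' G.
  have [a [b [G0 [_ E]]]] := classP Q.
  move: hG hG'; rewrite /inP E => h1 h2.
  have [ea eb] := iso1_ij h1; subst a b.
  move/iso1_packE: h1 => h1; move/iso1_packE: h2 => h2.
  exact: iso_trans (iso_sym h2) h1.
have [a [b [ba ab]]] := iso_c1 isoF isoG.
have D2 := dec_iso ba ab D'.
rewrite (card_ind hA).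
apply: esym; apply: (KS_fin (w := fun Z => ind (inP R Z))) D D2 lY _.
  by move=> A1 B1; apply: ind_iso.
by move=> t; apply: indec_loc.
Qed.

Lemma mu_nc (P Q R : SC C) : ~ composable P Q -> mu P Q R = 0%N.
Proof.
move=> nc; have := epsilon_spec (inhabits 0%N) (mult_rel P Q R) (mult_rel_ex P Q R).
rewrite -/(mu P Q R); case; last by case.
move=> [i [j [l [F [G [hF [hG _]]]]]]]; case: nc; by exists i, j, l, F, G.
Qed.

End Mu.

Lemma ind_T (P : Prop) : P -> ind P = 1%N.
Proof. by rewrite /ind; case: pbP. Qed.
Lemma ind_F (P : Prop) : ~ P -> ind P = 0%N.
Proof. by rewrite /ind; case: pbP. Qed.

Lemma enum_cls (T : Type) (a : nat) (V : 'I_a -> T) (H : T -> nat) :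
  exists m (g : 'I_m -> T), injective g /\ (forall x, exists t, g t = V x) /\
   (\sum_(t < m) (\sum_x ind (V x = g t)) * H (g t) = \sum_x H (V x))%N.
Proof.
elim: a V => [|a IH] V.
  have g0 : 'I_0 -> T by case.
  exists 0%N, g0; split; first by case.
  by split; [case|rewrite !big_ord0].
have [m [g [ig [cov S]]]] := IH (fun x => V (lift ord0 x)).
case: (classic (exists t, g t = V ord0)) => [[t0 Ht0]|nim].
  exists m, g; split => //; split.
    by move=> x; case: (unliftP ord0 x) => [x'|] ->; [apply: cov|exists t0].
  rewrite [RHS]big_ord_recl -S.
  transitivity (\sum_(t < m) (ind (V ord0 = g t) * H (g t) +
     (\sum_x ind (V (lift ord0 x) = g t)) * H (g t)))%N.
    by apply: eq_bigr => t _; rewrite big_ord_recl mulnDl.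
  rewrite big_split /= (bigD1 t0) //= ind_T // mul1n Ht0 big1 ?addn0 //.
  by move=> t nt; rewrite ind_F ?mul0n // => E; move: nt; rewrite -(ig _ _ (etrans Ht0 E)) eqxx.
exists m.+1, (fun t : 'I_m.+1 => oapp g (V ord0) (unlift ord_max t)); split; last split.
- move=> t1 t2; case: (unliftP ord_max t1) => [t1'|] ->; case: (unliftP ord_max t2) => [t2'|] ->;
    rewrite ?liftK ?unlift_none //=.
  + by move/ig ->.
  + by move=> E; case: nim; exists t1'.
  + by move=> E; case: nim; exists t2'.
- move=> x; case: (unliftP ord0 x) => [x'|] ->.
    by have [t Ht] := cov x'; exists (lift ord_max t); rewrite liftK.
  by exists ord_max; rewrite unlift_none.
rewrite (bigD1_ord ord_max) //= unlift_none /= [RHS]big_ord_recl -S.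
congr (_ + _)%N.
  rewrite big_ord_recl ind_T // big1 ?addn0 ?mul1n //.
  move=> x _; apply: ind_F => E; have [t Ht] := cov x; case: nim; exists t.
  by rewrite Ht.
apply: eq_bigr => t _; rewrite liftK /= big_ord_recl ind_F ?add0n //.
by move=> E; case: nim; exists t.
Qed.

Section Final.
Variables (k : fieldType) (C : TwoCat k).
Hypothesis HA : admissible C.

Record DecR i j (X : tc_hom C i j) := DecRMk {
  dm : nat; dY : 'I_dm -> tc_hom C i j;
  dinj : forall t, lc_hom _ (dY t) X; dprj : forall t, lc_hom _ X (dY t);
  dD : @dec _ _ X 1_X _ dY dinj dprj; dl : forall t, local_end (dY t) }.
Arguments dm {i j X} d. Arguments dY {i j X} d _. Arguments dinj {i j X} d _.
Arguments dprj {i j X} d _. Arguments dD {i j X} d. Arguments dl {i j X} d _.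

Lemma decR_inh i j (X : tc_hom C i j) : inhabited (DecR X).
Proof.
have [m [Y [inj [prj [D lY]]]]] := decomp HA X.
by constructor; exact: (DecRMk D lY).
Qed.
Definition pick i j (X : tc_hom C i j) : DecR X := epsilon (decR_inh X) (fun _ => True).

Lemma mu_nz (P Q R : SC C) : mu P Q R <> 0%N ->
  exists i j l (F : tc_hom C j l) (G : tc_hom C i j) (Z : tc_hom C i l),
    inP P F /\ inP Q G /\ inP R Z.
Proof.
move=> nz; case: (classic (composable P Q)) => [[i [j [l [F [G [hF hG]]]]]]|nc]; last first.
  by case: nz; apply: mu_nc.
have D := pick (tc_c1 F G).
move: nz; rewrite (mu_spec HA R hF hG (dD D) (dl D)) => nz.
case: (classic (exists t, inP R (dY D t))) => [[t ht]|nt].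
  by exists i, j, l, F, G, (dY D t).
case: nz; apply: big1 => t _; apply: ind_F => ht; case: nt; by exists t.
Qed.

Lemma cmulE a b : cmul (Some a) (Some b) = Some (a * b)%N.
Proof. by case: a. Qed.

Lemma csum0 (f g : SC C -> nat) (P0 : SC C) : (forall i, f i * g i = 0)%N ->
  csum_rel (fun i => cmul (Some (f i)) (Some (g i))) (Some 0%N).
Proof.
move=> f0; rewrite /csum_rel; split; first by move=> i; rewrite cmulE.
exists 0%N, (fun _ => P0); split; first by case.
split; last by rewrite big_ord0.
by move=> i; rewrite cmulE f0.
Qed.

Lemma side (P1 P2 : SC C) a b n (V : 'I_n -> tc_hom C a b) (lV : forall x, local_end (V x))
  (Hmu : forall P, mu P1 P2 P = (\sum_x ind (inP P (V x)))%N) (Hf : SC C -> nat) N :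
  (\sum_x Hf (cls (local_indec (lV x))))%N = N ->
  csum_rel (fun i => cmul (Some (mu P1 P2 i)) (Some (Hf i))) (Some N).
Proof.
move=> HN.
have [m [g [ig [cov S]]]] := enum_cls (fun x => cls (local_indec (lV x))) Hf.
have E : forall P x, ind (inP P (V x)) = ind (cls (local_indec (lV x)) = P).
  move=> P x; rewrite /ind; case: pbP => [h|h]; case: pbP => [h'|h'] //.
    by case: h'; symmetry; apply: cls_eq.
  by case: h; rewrite -h'; apply: inP_cls.
rewrite /csum_rel; split; first by move=> i /=; case: (mu P1 P2 i).
exists m, g; split => //; split.
  move=> P; rewrite cmulE; case: (eqVneq (mu P1 P2 P) 0%N) => [->|]; first by rewrite mul0n.
  rewrite Hmu => nz _.
  case: (classic (exists x, inP P (V x))) => [[x hx]|nx].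
    have [t Ht] := cov x; exists t; rewrite Ht; symmetry; exact: cls_eq.
  by case/eqP: nz; apply: big1 => x _; apply: ind_F => hx; case: nx; exists x.
rewrite -HN -S; apply: eq_bigr => t _.
by rewrite cmulE /= Hmu; congr (_ * _)%N; apply: eq_bigr => x _; rewrite E.
Qed.


Lemma fin_supp (r s : SC C) (P0 : SC C) : fin_support (fun i => Some (mu r s i)).
Proof.
case: (classic (composable r s)) => [[i [j [l [F [G [hF hG]]]]]]|nc]; last first.
  by exists 0%N, (fun _ => P0) => R; rewrite mu_nc.
pose D := pick (tc_c1 F G).
exists (dm D), (fun t => cls (local_indec (dl D t))) => R HR.
have nz : mu r s R <> 0%N by move=> E; apply: HR; rewrite E.
move: nz; rewrite (mu_spec HA R hF hG (dD D) (dl D)) => nz.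
case: (classic (exists t, inP R (dY D t))) => [[t ht]|nt].
  by exists t; symmetry; exact: cls_eq.
by case: nz; apply: big1 => t _; apply: ind_F => ht; case: nt; exists t.
Qed.

Lemma assoc (P0 r s t u : SC C) : exists c,
  csum_rel (fun i => cmul (Some (mu s t i)) (Some (mu r i u))) c /\
  csum_rel (fun j => cmul (Some (mu r s j)) (Some (mu j t u))) c.
Proof.
case: (classic (composable s t)) => [cst|nst]; last first.
  exists (Some 0%N); split; apply: csum0 P0 _ => x.
    by rewrite mu_nc.
  case: (eqVneq (mu r s x) 0%N) => [->//|/eqP nz1].
  case: (eqVneq (mu x t u) 0%N) => [->|/eqP nz2]; first by rewrite muln0.
  exfalso; have [i1 [j1 [l1 [F1 [G1 [Z1 [h1 [h2 h3]]]]]]]] := mu_nz nz1.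
  have [i2 [j2 [l2 [F2 [G2 [Z2 [g1 [g2 g3]]]]]]]] := mu_nz nz2.
  have [e1 e2] := inP_ij h3 g1; subst j2 l2.
  by apply: nst; exists i2, i1, j1, G1, G2.
case: (classic (composable r s)) => [crs|nrs]; last first.
  exists (Some 0%N); split; apply: csum0 P0 _ => x; last by rewrite mu_nc.
  case: (eqVneq (mu s t x) 0%N) => [->//|/eqP nz1].
  case: (eqVneq (mu r x u) 0%N) => [->|/eqP nz2]; first by rewrite muln0.
  exfalso; have [i1 [j1 [l1 [F1 [G1 [Z1 [h1 [h2 h3]]]]]]]] := mu_nz nz1.
  have [i2 [j2 [l2 [F2 [G2 [Z2 [g1 [g2 g3]]]]]]]] := mu_nz nz2.
  have [e1 e2] := inP_ij h3 g2; subst i2 j2.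
  by apply: nrs; exists j1, l1, l2, F2, F1.
move: crs cst => [i [j [l [F [G [hF hG]]]]]] [i' [j' [l' [G' [H [hG' hH]]]]]].
have [e1 e2] := inP_ij hG hG'; subst j' l'.
pose Zd := pick (tc_c1 F (tc_c1 G H)).
exists (Some (\sum_z ind (inP u (dY Zd z))))%N; split.
  pose V := pick (tc_c1 G H).
  apply: (side (lV := dl V)) => [P|]; first exact: (mu_spec HA P hG hH (dD V) (dl V)).
  pose W x := pick (tc_c1 F (dY V x)).
  transitivity (\sum_x \sum_y ind (inP u (dY (W x) y)))%N.
    by apply: eq_bigr => x _; exact: (mu_spec HA u hF (inP_cls _) (dD (W x)) (dl (W x))).
  have Dfl := dec_flat (dec_left HA.2 F (dD V)) (fun x => dD (W x)).
  rewrite -(KS_fin (w := fun Z => ind (inP u Z)) _ Dfl (dD Zd)); last first.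
  - exact: dl.
  - by move=> p; apply: dl.
  - by move=> A B; apply: ind_iso.
  by rewrite (sig_big_dep xpredT (fun x => xpredT) (fun x y => ind (inP u (dY (W x) y)))).
pose U := pick (tc_c1 F G).
apply: (side (lV := dl U)) => [P|]; first exact: (mu_spec HA P hF hG (dD U) (dl U)).
pose W x := pick (tc_c1 (dY U x) H).
transitivity (\sum_x \sum_y ind (inP u (dY (W x) y)))%N.
  by apply: eq_bigr => x _; exact: (mu_spec HA u (inP_cls _) hH (dD (W x)) (dl (W x))).
have Dfl := dec_flat (dec_right HA.2 H (dD U)) (fun x => dD (W x)).
rewrite -(KS_fin_eq (w := fun Z => ind (inP u Z)) _ (tc_c1A F G H) Dfl (dD Zd)); last first.
- exact: dl.
- by move=> p; apply: dl.
- by move=> A B; apply: ind_iso.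
by rewrite (sig_big_dep xpredT (fun x => xpredT) (fun x y => ind (inP u (dY (W x) y)))).
Qed.

End Final.

Local Close Scope ring_scope.

Theorem theorem6 (k : fieldType) (C : TwoCat k) :
  admissible C -> inhabited (SC C) ->
  finitary_multisemigroup (fun P Q R : SC C => Some (mu P Q R)).
Proof.
move=> HA [P0]; split; [split|split].
- by constructor.
- by move=> r s t u; exact: (assoc HA P0 r s t u).
- by move=> r s t.
- by move=> r s; exact: (fin_supp HA r s P0).
Qed.
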